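(* Let $\mathcal{G}$ be a GBS graph of groups and $w=a_0^{k_0}y_1a_1^{k_1}\cdots y_na_n^{k_n}$ a $\mathcal{G}$-factorization. Let $1\le i_1<\dots<i_j\le n$ be indices such that $[i_1]\cdots[i_j]\in\Sigma_w^*$ is freely reduced and $\mathcal{C}(w)=[1]\cdots[n]=[i_1]\cdots[i_j]$ in $F_{\Lambda_w}$. Then the $\mathcal{G}$-factorization $$\hat w=a_0^{k_{0,i_1-1}}\,y_{i_1}\,a_{i_1}^{k_{i_1,i_2-1}}\cdots y_{i_j}\,a_{i_j}^{k_{i_j,n}}$$ is Britton-reduced and $w=\hat w$ in $F(\mathcal{G})$.
   Context: $\mathcal{G}$: finite connected graph $Y$ (vertices $V(Y)$, edges $E(Y)$, maps $\iota,\tau$, fixed-point-free involution $y\mapsto\bar y$ with $\iota(\bar y)=\tau(y)$) and integers $\alpha_y,\beta_y\ne0$ with $\alpha_y=\beta_{\bar y}$; $F(\mathcal{G})$ has generators $V(Y)\cup E(Y)$ and relations $\bar yy=1$, $y\,b^{\beta_y}\bar y=a^{\alpha_y}$ ($a=\iota(y)$, $b=\tau(y)$). A $\mathcal{G}$-factorization is a word $a_0^{k_0}y_1a_1^{k_1}\cdots y_na_n^{k_n}$ with $\iota(y_i)=a_{i-1}$, $\tau(y_i)=a_i$, $a_n=a_0$, $k_i\in\mathbb{Z}$ ($a^0$ = empty word). For $0\le i\le j\le n$: $w_{i,j}=a_i^{k_i}y_{i+1}\cdots y_ja_j^{k_j}$, $k_{i,j}=\sum_{\nu=i}^{j}k_\nu\prod_{\mu=i+1}^{\nu}\alpha_{y_\mu}/\beta_{y_\mu}\in\mathbb{Q}$.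 Fix an orientation $D\subseteq E(Y)$ and let $\rho$ map words additively to $\mathbb{Z}^D$ via $\rho(a^k)=0$, $\rho(y)=e_y$, $\rho(\bar y)=-e_y$ ($y\in D$). On $\{1,\dots,n\}$ let $i\sim_{\mathcal{C}}j$ iff $y_i=\bar y_j$ and, for $i<j$, $\rho(w_{i,j-1})=0$ and $k_{i,j-1}\in\beta_{y_i}\mathbb{Z}$ (symmetrically for $j<i$); $i\approx j$ iff $i=j$ or $i\sim_{\mathcal{C}}\ell\sim_{\mathcal{C}}j$ for some $\ell$ (an equivalence relation). $\Sigma_w$ is the set of $\approx$-classes $[i]$, enlarged: $\overline{[i]}:=[j]$ if $i\sim_{\mathcal{C}}j$ for some $j$ (well defined), otherwise $\overline{[i]}$ is a new element; this is a fixed-point-free involution on $\Sigma_w$. $\Lambda_w$ contains one element of each pair $\{x,\bar x\}$; $F_{\Lambda_w}$ is the free group on $\Lambda_w$ with $\bar x=x^{-1}$; a word over $\Sigma_w$ is freely reduced if it has no factor $x\bar x$. Britton reductions are the rules $a^ka^m\to a^{k+m}$ ($a\in V(Y)$, $k,m\neq0$) and $y\,b^{\beta_y m}\bar y\to a^{\alpha_y m}$ ($a=\iota(y)$, $b=\tau(y)$, $m\in\mathbb{Z}$); a word is Britton-reduced if none applies. *)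

(* Defs.v *)
From HB Require Import structures.
From mathcomp Require Import all_boot all_order all_algebra.
From Stdlib Require Import Relations.Relation_Operators.
Set Implicit Arguments. Unset Strict Implicit. Unset Printing Implicit Defensive.
Import Order.TTheory GRing.Theory Num.Theory.
Local Open Scope ring_scope.

Record gbs := GBS {
  V : finType;
  E : finType;
  iotaY : E -> V;
  tau : E -> V;
  bar : E -> E;
  alpha : E -> int;
  beta : E -> int;
  bar_inv : forall y, bar (bar y) = y;
  bar_fpf : forall y, bar y <> y;
  iota_bar : forall y, iotaY (bar y) = tau y;
  alpha_nz : forall y, alpha y != 0;
  beta_nz : forall y, beta y != 0;
  alpha_beta_bar : forall y, alpha y = beta (bar y);
  connected : forall u v : V,
    connect (fun s t => [exists y, (iotaY y == s) && (tau y == t)]) u v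
}.

Section GBS.
Variable G : gbs.

Inductive letter := LV of V G & int | LE of E G.

Definition power (a : V G) (k : int) : seq letter :=
  if k == 0 then [::] else [:: LV a k].

Definition glet := ((V G + E G) * bool)%type.
Definition gpow (a : V G) (k : int) : seq glet :=
  nseq `|k|%N (inl a, (0 <= k)%R).
Definition interp_letter (l : letter) : seq glet :=
  match l with LV a k => gpow a k | LE y => [:: (inr y, true)] end.
Definition interp (s : seq letter) : seq glet := flatten (map interp_letter s).

Inductive frel : seq glet -> seq glet -> Prop :=
| frel_free x b : frel [:: (x, b); (x, ~~ b)] [::]
| frel_bar y : frel [:: (inr (bar y), true); (inr y, true)] [::]
| frel_edge y : frel ((inr y, true) :: gpow (tau y) (beta y) ++ [:: (inr (bar y), true)])
                     (gpow (iotaY y) (alpha y)).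
Definition fstep (u v : seq glet) : Prop :=
  exists p q l r, frel l r /\ u = p ++ l ++ q /\ v = p ++ r ++ q.
Definition Feq (u v : seq letter) : Prop :=
  clos_refl_sym_trans _ fstep (interp u) (interp v).

Definition britton_reduced (s : seq letter) : Prop :=
  (forall p q a k m, k != 0 -> m != 0 -> s <> p ++ LV a k :: LV a m :: q) /\
  (forall p q y m, s <> p ++ LE y :: power (tau y) (beta y * m) ++ LE (bar y) :: q).

(* a_0^{k_0} y_1 a_1^{k_1} ... y_n a_n^{k_n} *)
Record fact := Fact { fn : nat; fa : nat -> V G; fy : nat -> E G; fk : nat -> int }.

Definition is_fact (f : fact) : Prop :=
  (forall i, 1 <= i <= fn f -> iotaY (fy f i) = fa f i.-1 /\ tau (fy f i) = fa f i)%N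
  /\ fa f (fn f) = fa f 0.

Definition word_of (f : fact) : seq letter :=
  power (fa f 0) (fk f 0) ++
  flatten [seq LE (fy f i) :: power (fa f i) (fk f i) | i <- iota 1 (fn f)].

Definition kq (f : fact) (i j : nat) : rat :=
  \sum_(i <= nu < j.+1)
    ((fk f nu)%:~R * \prod_(i.+1 <= mu < nu.+1)
        ((alpha (fy f mu))%:~R / (beta (fy f mu))%:~R)).

Definition orientation (D : {set E G}) : Prop := forall y, (y \in D) != (bar y \in D).
Definition e_vec (y : E G) : {ffun E G -> int} := [ffun z => Posz ((z == y) : nat)].
Definition rho_e (D : {set E G}) (y : E G) : {ffun E G -> int} :=
  if y \in D then e_vec y else - e_vec (bar y).
(* rho(w_{i,j}) : the edges of w_{i,j} are y_{i+1}, ..., y_j *)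
Definition rho (D : {set E G}) (f : fact) (i j : nat) : {ffun E G -> int} :=
  \sum_(i.+1 <= mu < j.+1) rho_e D (fy f mu).

Definition in_bZ (q : rat) (b : int) : Prop := exists z : int, q = (b * z)%:~R.

Definition simC (D : {set E G}) (f : fact) (i j : nat) : Prop :=
  (1 <= i <= fn f)%N /\ (1 <= j <= fn f)%N /\ fy f i = bar (fy f j) /\
  (((i < j)%N /\ rho D f i j.-1 = 0 /\ in_bZ (kq f i j.-1) (beta (fy f i))) \/
   ((j < i)%N /\ rho D f j i.-1 = 0 /\ in_bZ (kq f j i.-1) (beta (fy f j)))).

Definition approx (D : {set E G}) (f : fact) (i j : nat) : Prop :=
  i = j \/ exists l, simC D f i l /\ simC D f l j.

(* Sigma_w: (i,true) stands for [i], (i,false) for bar[i] *)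
Definition sig_eq (D : {set E G}) (f : fact) (x x' : nat * bool) : Prop :=
  (x.2 = x'.2 /\ approx D f x.1 x'.1) \/ (x.2 <> x'.2 /\ simC D f x.1 x'.1).
Definition sig_bar (x : nat * bool) : nat * bool := (x.1, ~~ x.2).

Definition freely_reduced (D : {set E G}) (f : fact) (s : seq (nat * bool)) : Prop :=
  forall p q x x', s = p ++ x :: x' :: q -> ~ sig_eq D f x' (sig_bar x).

Inductive lstep (D : {set E G}) (f : fact) : seq (nat * bool) -> seq (nat * bool) -> Prop :=
| lstep_cancel p q x x' : sig_eq D f x' (sig_bar x) -> lstep D f (p ++ x :: x' :: q) (p ++ q)
| lstep_subst p q x x' : sig_eq D f x x' -> lstep D f (p ++ x :: q) (p ++ x' :: q).
Definition Leq (D : {set E G}) (f : fact) (u v : seq (nat * bool)) : Prop :=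
  clos_refl_sym_trans _ (lstep D f) u v.

Definition cls (s : seq nat) : seq (nat * bool) := [seq (i, true) | i <- s].

(* start index i_t (with i_0 = 0) and end index i_{t+1}-1 (with i_{j+1} = n+1) *)
Definition hat_start (idx : seq nat) (t : nat) : nat := nth 0%N (0%N :: idx) t.
Definition hat_end (n : nat) (idx : seq nat) (t : nat) : nat := (nth n.+1 idx t).-1.

End GBS.

(* Main.v *)
Require Import Defs.
From HB Require Import structures.
From mathcomp Require Import all_boot all_order all_algebra.
From mathcomp Require Import ring.
From Stdlib Require Import Relations.Relation_Operators.
Set Implicit Arguments. Unset Strict Implicit. Unset Printing Implicit Defensive.
Import Order.TTheory GRing.Theory Num.Theory.

Section Grp.
Variable G : gbs.
Local Notation glt := (glet G).
Definition fe (u v : seq glt) := clos_refl_sym_trans _ (@fstep G) u v.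

Lemma fe_refl (u : seq glt) : fe u u. Proof. exact: rst_refl. Qed.
Lemma fe_sym (u v : seq glt) : fe u v -> fe v u. Proof. exact: rst_sym. Qed.
Lemma fe_trans (u v w : seq glt) : fe u v -> fe v w -> fe u w. Proof. exact: rst_trans. Qed.

Lemma fstep_ctx (x z u v : seq glt) : fstep u v -> fstep (x ++ u ++ z) (x ++ v ++ z).
Proof.
case=> p [q [l [r [H [-> ->]]]]].
exists (x ++ p), (q ++ z), l, r; split => //; by rewrite !catA.
Qed.

Lemma fe_ctx (x z u v : seq glt) : fe u v -> fe (x ++ u ++ z) (x ++ v ++ z).
Proof.
elim=> [a b H|a|a b _ IH|a b c _ IH1 _ IH2].
- by apply: rst_step; apply: fstep_ctx.
- exact: rst_refl.
- exact: rst_sym.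
- exact: rst_trans IH2.
Qed.

Lemma fe_catl (x u v : seq glt) : fe u v -> fe (x ++ u) (x ++ v).
Proof. by move=> H; have := fe_ctx x [::] H; rewrite !cats0. Qed.
Lemma fe_catr (z u v : seq glt) : fe u v -> fe (u ++ z) (v ++ z).
Proof. by move=> H; exact: (fe_ctx [::] z H). Qed.
Lemma fe_cat (u u' v v' : seq glt) : fe u u' -> fe v v' -> fe (u ++ v) (u' ++ v').
Proof. move=> H1 H2; apply: fe_trans (fe_catr _ H1) (fe_catl _ H2). Qed.

Lemma fe_rel (l r : seq glt) : Defs.frel l r -> fe l r.
Proof. move=> H; apply: rst_step; exists [::], [::], l, r; by rewrite !cats0. Qed.

Lemma fe_free (x : V G + E G) b : fe [:: (x, b); (x, ~~ b)] [::].
Proof. apply: fe_rel; exact: frel_free. Qed.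

Lemma fe_nseq (x : V G + E G) b n m :
  fe (nseq n.+1 (x, b) ++ nseq m.+1 (x, ~~ b)) (nseq n (x, b) ++ nseq m (x, ~~ b)).
Proof.
have -> : nseq n.+1 (x, b) ++ nseq m.+1 (x, ~~ b) =
          nseq n (x, b) ++ [:: (x, b); (x, ~~ b)] ++ nseq m (x, ~~ b).
  by rewrite -[n.+1]addn1 nseqD -catA.
exact: fe_ctx (fe_free x b).
Qed.

Lemma fe_nseq_gen (x : V G + E G) b n m :
  fe (nseq n (x, b) ++ nseq m (x, ~~ b))
     (if (m <= n)%N then nseq (n - m) (x, b) else nseq (m - n) (x, ~~ b)).
Proof.
elim: n m => [|n IH] [|m] /=.
- exact: fe_refl.
- exact: fe_refl.
- rewrite cats0; exact: fe_refl.
- apply: fe_trans (fe_nseq x b n m) _; rewrite ltnS subSS; exact: IH.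
Qed.

Lemma gpow_nseq (a : V G) (k : int) :
  gpow a k = nseq `|k|%N (inl a, (0 <= k)%R).
Proof. by []. Qed.

Lemma gpowD (a : V G) (k m : int) : fe (gpow a k ++ gpow a m) (gpow a (k + m)).
Proof.
rewrite /gpow.
case: k => k; case: m => m.
- rewrite -PoszD /= -nseqD; exact: fe_refl.
- rewrite NegzE /=.
  apply: (fe_trans (fe_nseq_gen (inl a) true k m.+1)).
  case: ifP => H.
  + rewrite subzn // /=. exact: fe_refl.
  + have H' : (k <= m.+1)%N by rewrite ltnW // ltnNge H.
    rewrite -opprB subzn // abszN /= oppr_ge0 lez_nat leqn0 subn_eq0 H /=.
    exact: fe_refl.
- rewrite NegzE /=.
  apply: (fe_trans (fe_nseq_gen (inl a) false k.+1 m)).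
  rewrite addrC.
  case: ifP => H.
  + rewrite -opprB subzn // abszN /= oppr_ge0 lez_nat leqn0 subn_eq0.
    case E: (k.+1 - m)%N => [|d] /=.
    * exact: fe_refl.
    * have -> : (k.+1 <= m)%N = false by rewrite leqNgt -subn_gt0 E.
      exact: fe_refl.
  + have H' : (k.+1 <= m)%N by rewrite ltnW // ltnNge H.
    rewrite subzn // /=. exact: fe_refl.
- have -> : (Negz k + Negz m)%R = Negz (k + m).+1 by [].
  have E1 : forall n, nseq `|Negz n|%N (inl a, (0 <= Negz n)%R) = nseq n.+1 (@inl _ (E G) a, false) by [].
  rewrite !E1 -nseqD addSn addnS; exact: fe_refl.
Qed.


Definition yl (y : E G) : glt := (inr y, true).

Lemma gpow0 (a : V G) : gpow a 0 = [::]. Proof. by []. Qed.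

Lemma fe_barl y : fe [:: yl (bar y); yl y] [::].
Proof. apply: fe_rel; exact: frel_bar. Qed.
Lemma fe_barr y : fe [:: yl y; yl (bar y)] [::].
Proof. have := frel_bar (bar y); rewrite bar_inv => H; exact: fe_rel. Qed.

Lemma fe_edge y : fe (yl y :: gpow (tau y) (beta y) ++ [:: yl (bar y)]) (gpow (iotaY y) (alpha y)).
Proof. apply: fe_rel; exact: frel_edge. Qed.

Lemma fe_drop (u v w : seq glt) : fe w [::] -> fe (u ++ w ++ v) (u ++ v).
Proof. by move=> H; have := fe_ctx u v H. Qed.

Lemma pinch_nat y (n : nat) :
  fe (yl y :: gpow (tau y) (beta y * n%:Z) ++ [:: yl (bar y)]) (gpow (iotaY y) (alpha y * n%:Z)).
Proof.
elim: n => [|n IH].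
  rewrite !mulr0 /=. exact: fe_barr.
set b := tau y; set a := iotaY y.
have e1 : (beta y * n.+1%:Z = beta y * n%:Z + beta y)%R by rewrite -addn1 PoszD mulrDr mulr1.
have e2 : (alpha y * n.+1%:Z = alpha y * n%:Z + alpha y)%R by rewrite -addn1 PoszD mulrDr mulr1.
rewrite e1 e2.
apply: (fe_trans _ (gpowD a (alpha y * n%:Z) (alpha y))).
apply: (fe_trans _ (fe_cat IH (fe_edge y))).
apply: (@fe_trans _ (yl y :: gpow b (beta y * n%:Z) ++ gpow b (beta y) ++ [:: yl (bar y)])).
  have := fe_ctx [:: yl y] [:: yl (bar y)] (fe_sym (gpowD b (beta y * n%:Z) (beta y))).
  by rewrite /= -catA.
have := fe_ctx (yl y :: gpow b (beta y * n%:Z)) (gpow b (beta y) ++ [:: yl (bar y)]) (fe_sym (fe_barl y)).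
rewrite /= -!catA /=. by [].
Qed.

Lemma fe_nil_r (u w : seq glt) : fe w [::] -> fe u (u ++ w).
Proof. move=> H; apply: fe_sym; have := fe_catl u H; by rewrite cats0. Qed.

Lemma pinch y (z : int) :
  fe (yl y :: gpow (tau y) (beta y * z) ++ [:: yl (bar y)]) (gpow (iotaY y) (alpha y * z)).
Proof.
case: z => n; first exact: pinch_nat.
rewrite NegzE !mulrN.
set b := tau y; set a := iotaY y; set N := n.+1.
set u := yl y :: gpow b (- (beta y * N%:Z)) ++ [:: yl (bar y)].
have h0 : fe (gpow a (alpha y * N%:Z) ++ gpow a (- (alpha y * N%:Z))) [::].
  apply: fe_trans (gpowD _ _ _) _. rewrite subrr. exact: fe_refl.
apply: (fe_trans (fe_nil_r u h0)).
apply: (@fe_trans _ (u ++ (yl y :: gpow b (beta y * N%:Z) ++ [:: yl (bar y)]) ++ gpow a (- (alpha y * N%:Z)))).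
  rewrite catA [in X in fe _ X]catA. apply: fe_catr. apply: fe_catl. apply: fe_sym. exact: pinch_nat.
rewrite /u.
have h1 := fe_ctx (yl y :: gpow b (- (beta y * N%:Z))) (gpow b (beta y * N%:Z) ++ [:: yl (bar y)] ++ gpow a (- (alpha y * N%:Z))) (fe_barl y).
rewrite /= ?cat_cons -?catA ?cat_cons /= in h1.
rewrite /= ?cat_cons -?catA ?cat_cons /=. apply: fe_trans h1 _.
have h2 := fe_ctx [:: yl y] ([:: yl (bar y)] ++ gpow a (- (alpha y * N%:Z))) (gpowD b (- (beta y * N%:Z)) (beta y * N%:Z)).
rewrite addNr gpow0 /= ?cat_cons -?catA ?cat_cons /= in h2.
apply: fe_trans h2 _.
have h3 := fe_ctx [::] (gpow a (- (alpha y * N%:Z))) (fe_barr y).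
exact: h3.
Qed.

Lemma shift y (z : int) :
  fe (gpow (iotaY y) (alpha y * z) ++ [:: yl y]) (yl y :: gpow (tau y) (beta y * z)).
Proof.
apply: (fe_trans (fe_catr [:: yl y] (fe_sym (pinch y z)))).
have h := fe_ctx (yl y :: gpow (tau y) (beta y * z)) [::] (fe_barl y).
rewrite !cats0 /= ?cat_cons -?catA ?cat_cons /= in h. rewrite /= ?cat_cons -?catA ?cat_cons /=. exact: h.
Qed.
End Grp.


Local Open Scope ring_scope.

Section Alg.
Variable G : gbs.
Variable D : {set E G}.
Hypothesis HD : orientation D.
Variable f : fact G.

Definition ratio (y : E G) : rat := (alpha y)%:~R / (beta y)%:~R.

Lemma intr_neq0 (z : int) : z != 0 -> (z%:~R : rat) != 0.
Proof. by rewrite intr_eq0. Qed.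

Lemma alpha_r (y : E G) : ((alpha y)%:~R : rat) != 0. Proof. apply: intr_neq0; exact: alpha_nz. Qed.
Lemma beta_r (y : E G) : ((beta y)%:~R : rat) != 0. Proof. apply: intr_neq0; exact: beta_nz. Qed.

Lemma ratio_neq0 (y : E G) : ratio y != 0.
Proof. by rewrite /ratio mulf_eq0 invr_eq0 negb_or alpha_r beta_r. Qed.

Lemma alpha_bar (y : E G) : alpha (bar y) = beta y.
Proof. by rewrite alpha_beta_bar bar_inv. Qed.

Lemma ratio_bar (y : E G) : ratio (bar y) = (ratio y)^-1.
Proof. by rewrite /ratio alpha_bar -alpha_beta_bar invf_div. Qed.

Lemma ratio_beta (y : E G) : ratio y * (beta y)%:~R = (alpha y)%:~R.
Proof. by rewrite /ratio mulfVK ?beta_r. Qed.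

Definition rr (mu : nat) := ratio (fy f mu).
Definition Pr (m : nat) : rat := \prod_(1 <= mu < m.+1) rr mu.
Definition Pf (x : nat) : rat := \sum_(0 <= nu < x) (fk f nu)%:~R * Pr nu.

Lemma Pr0 : Pr 0 = 1. Proof. by rewrite /Pr big_geq. Qed.
Lemma PrS m : Pr m.+1 = Pr m * rr m.+1.
Proof. by rewrite /Pr big_nat_recr. Qed.

Lemma Pr_split i nu : (i <= nu)%N -> Pr nu = Pr i * \prod_(i.+1 <= mu < nu.+1) rr mu.
Proof. by move=> H; rewrite /Pr (@big_cat_nat _ _ _ i.+1) //. Qed.

Lemma kqE i j : (i <= j.+1)%N -> Pr i * kq f i j = Pf j.+1 - Pf i.
Proof.
move=> Hij.
rewrite /Pf (@big_cat_nat _ _ _ i 0 j.+1) //= addrAC subrr add0r.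
rewrite /kq mulr_sumr; apply: eq_big_nat => nu /andP [H1 H2].
rewrite (Pr_split H1) mulrCA; congr (_ * _).
Qed.

Lemma PfS x : Pf x.+1 = Pf x + (fk f x)%:~R * Pr x.
Proof. by rewrite /Pf big_nat_recr. Qed.

Lemma kq_ii i : kq f i i = (fk f i)%:~R.
Proof. by rewrite /kq big_nat1 big_geq // mulr1. Qed.


Local Notation FV := {ffun E G -> int}.
Lemma addfE (R1 R2 : FV) e : (R1 + R2) e = R1 e + R2 e. Proof. by rewrite ffunE. Qed.
Lemma oppfE (R1 : FV) e : (- R1) e = - R1 e. Proof. by rewrite ffunE. Qed.
Lemma zerofE e : (0 : FV) e = 0. Proof. by rewrite ffunE. Qed.

Definition Rp (m : nat) : FV := rho D f 0 m.
Lemma Rp0 : Rp 0 = 0. Proof. by rewrite /Rp /rho big_geq. Qed.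
Lemma RpS m : Rp m.+1 = Rp m + rho_e D (fy f m.+1).
Proof. by rewrite /Rp /rho big_nat_recr. Qed.
Lemma rhoE i j : (i <= j)%N -> rho D f i j = Rp j - Rp i.
Proof.
move=> H; rewrite /Rp /rho (@big_cat_nat _ _ _ i.+1 1 j.+1) //=.
by rewrite addrC addrK.
Qed.

Lemma rho_bar y : rho_e D (bar y) = - rho_e D y.
Proof.
rewrite /rho_e bar_inv. have := HD y.
case: (y \in D); case: (bar y \in D) => //= _.
by rewrite opprK.
Qed.

Definition piR (R : FV) : rat := \prod_(e in D) ratio e ^ (R e).

Lemma piRD R1 R2 : piR (R1 + R2) = piR R1 * piR R2.
Proof.
rewrite /piR -big_split; apply: eq_bigr => e _.
by rewrite addfE expfzDr // ratio_neq0.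
Qed.

Lemma piR0 : piR 0 = 1.
Proof. rewrite /piR; apply: big1 => e _; by rewrite zerofE expr0z. Qed.

Lemma piRN R : piR (- R) = (piR R)^-1.
Proof.
rewrite /piR -prodfV; apply: eq_bigr => e _.
by rewrite oppfE invr_expz.
Qed.

Lemma piR_e y : y \in D -> piR (e_vec y) = ratio y.
Proof.
move=> Hy; rewrite /piR (bigD1 y) //= big1 ?mulr1.
  by rewrite ffunE eqxx expr1z.
move=> e /andP [_ He]; by rewrite ffunE (negbTE He) expr0z.
Qed.

Lemma piR_rho y : piR (rho_e D y) = ratio y.
Proof.
rewrite /rho_e; case: ifP => Hy; first exact: piR_e.
have Hb : bar y \in D by have := HD y; rewrite Hy; case: (bar y \in D).
by rewrite piRN piR_e // ratio_bar invrK.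
Qed.

Lemma Pr_piR m : Pr m = piR (Rp m).
Proof.
elim: m => [|m IH]; first by rewrite Pr0 Rp0 piR0.
by rewrite PrS RpS piRD IH piR_rho.
Qed.

Lemma piR_neq0 R : piR R != 0.
Proof.
rewrite /piR; apply/prodf_neq0 => e _. by rewrite expfz_eq0 negb_and ratio_neq0 orbT.
Qed.

Lemma Pr_neq0 m : Pr m != 0.
Proof. rewrite Pr_piR; exact: piR_neq0. Qed.


Definition Kt := (E G * FV * rat)%type.
Definition Mo (y : E G) (R : FV) : rat := piR R * (alpha y)%:~R.
Definition frac (x : rat) : rat := x - (Num.floor x)%:~R.
Definition key (i : nat) : Kt := (fy f i, Rp i.-1, frac (Pf i / Mo (fy f i) (Rp i.-1))).
Definition kinv (k : Kt) : Kt := (bar k.1.1, k.1.2 + rho_e D k.1.1, k.2).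

Lemma kinvK : involutive kinv.
Proof.
case=> [[y R] c]; rewrite /kinv /= bar_inv rho_bar addrK //.
Qed.

Lemma kinv_neq k : kinv k != k.
Proof.
case: k => [[y R] c]; rewrite /kinv /=; apply/negP => /eqP [] H _.
exact: (bar_fpf H).
Qed.

Lemma Mo_bar y R : Mo (bar y) (R + rho_e D y) = Mo y R.
Proof.
rewrite /Mo piRD piR_rho alpha_bar -mulrA ratio_beta //.
Qed.

Lemma Mo_neq0 y R : Mo y R != 0.
Proof. by rewrite /Mo mulf_neq0 ?piR_neq0 ?alpha_r. Qed.

Lemma frac_eq x y : frac x = frac y <-> exists z : int, x - y = z%:~R.
Proof.
split.
  rewrite /frac => H; exists (Num.floor x - Num.floor y).
  rewrite intrB; apply/eqP; rewrite -subr_eq0; apply/eqP.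
  have -> : x - y - ((Num.floor x)%:~R - (Num.floor y)%:~R) =
            (x - (Num.floor x)%:~R) - (y - (Num.floor y)%:~R) by ring.
  by rewrite H subrr.
case=> z H.
have -> : x = y + z%:~R by rewrite -H addrC subrK.
rewrite /frac floorDrz ?intr_int // intrKfloor intrD; ring.
Qed.

Lemma key_inv i j : (0 < i < j)%N ->
  key j = kinv (key i) <->
  [/\ fy f j = bar (fy f i), rho D f i j.-1 = 0 & in_bZ (kq f i j.-1) (beta (fy f i))].
Proof.
move=> /andP [i0 ij].
have Ri : Rp i = Rp i.-1 + rho_e D (fy f i) by rewrite -{1}(prednK i0) RpS prednK.
have ij1 : (i <= j.-1)%N by rewrite -ltnS prednK // (leq_trans i0 (ltnW ij)).
have rhoij : rho D f i j.-1 = Rp j.-1 - Rp i by rewrite rhoE.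
have Kc : (Pf j - Pf i) / Mo (fy f i) (Rp i.-1) = kq f i j.-1 / (beta (fy f i))%:~R.
  have e1 : Pf j - Pf i = Pr i * kq f i j.-1.
    rewrite kqE ?prednK //; by [rewrite (leq_trans i0 (ltnW ij)) | rewrite ltnW // prednK //; exact: (leq_trans i0 (ltnW ij))].
  rewrite e1 /Mo -Pr_piR -[i in Pr i]prednK // PrS prednK // /rr /ratio.
  have h1 := Pr_neq0 i.-1. have h2 := alpha_r (fy f i). have h3 := beta_r (fy f i).
  field. by rewrite h1 h2 h3.
rewrite /key /kinv /=.
split.
  case=> e1 e2 e3.
  have eR : Rp j.-1 = Rp i by rewrite e2 Ri.
  split => //; first by rewrite rhoij eR subrr.
  rewrite e1 eR Ri Mo_bar in e3.
  case/frac_eq: e3 => z Hz.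
  exists z. rewrite intrM.
  have H : kq f i j.-1 / (beta (fy f i))%:~R = z%:~R by rewrite -Kc mulrBl Hz.
  rewrite -H. field. by rewrite beta_r.
case=> e1 e2 [z Hz].
have eR : Rp j.-1 = Rp i by apply/eqP; rewrite -subr_eq0 -rhoij e2.
congr (_, _, _); first by rewrite e1.
  by rewrite eR Ri.
rewrite e1 eR Ri Mo_bar; apply/frac_eq; exists z.
rewrite -mulrBl Kc Hz intrM.
field. by rewrite beta_r.
Qed.


Lemma simC_key i j : simC D f i j <->
  [/\ (1 <= i <= fn f)%N, (1 <= j <= fn f)%N & key j = kinv (key i)].
Proof.
split.
  case=> Hi [Hj [Hy H]]; split => //.
  case: H => [[ij [H1 H2]]|[ji [H1 H2]]].
    apply/key_inv; first by case/andP: Hi => -> _.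
    by split => //; rewrite Hy bar_inv.
  apply: (canRL kinvK); apply/esym; apply/key_inv; first by case/andP: Hj => -> _.
  by split.
case=> Hi Hj Hk; split => //; split => //.
case: (ltngtP i j) => c.
- have := (proj1 (key_inv (i:=i) (j:=j) _)) Hk.
  case/andP: Hi => i0 _; rewrite i0 c => /(_ isT) [e1 e2 e3].
  split; first by rewrite e1 bar_inv.
  by left.
- have Hk' : key i = kinv (key j) by rewrite Hk kinvK.
  have := (proj1 (key_inv (i:=j) (j:=i) _)) Hk'.
  case/andP: Hj => j0 _; rewrite j0 c => /(_ isT) [e1 e2 e3].
  split => //. by right.
- by move: Hk; rewrite c => /eqP; rewrite eq_sym (negbTE (kinv_neq _)).
Qed.

Lemma simC_sym i j : simC D f i j -> simC D f j i.
Proof.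
case/simC_key => Hi Hj Hk; apply/simC_key; split => //. by rewrite Hk kinvK.
Qed.

Definition lkey (x : nat * bool) : Kt := if x.2 then key x.1 else kinv (key x.1).

Lemma lkey_bar x : lkey (sig_bar x) = kinv (lkey x).
Proof. by case: x => i [] //=; rewrite kinvK. Qed.

Lemma approx_key i j : approx D f i j -> key i = key j.
Proof.
case=> [->//|[l [/simC_key [_ _ H1] /simC_key [_ _ H2]]]].
by rewrite H2 H1 kinvK.
Qed.

Lemma sig_eq_key x x' : sig_eq D f x x' -> lkey x = lkey x'.
Proof.
case: x x' => i b [j b'] [[/= eb H]|[/= eb H]].
  by rewrite /lkey /= eb (approx_key H).
case/simC_key: H => _ _ H.
rewrite /lkey /=. by case: b b' eb => [] [] //= _; rewrite H ?kinvK.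
Qed.

End Alg.


Section FreeRed.
Variable T : eqType.
Variable inv : T -> T.
Hypothesis invK : involutive inv.

Definition stepK (s : seq T) (x : T) : seq T :=
  if s is t :: s' then (if t == inv x then s' else x :: s) else [:: x].
Definition redK (l : seq T) := foldl stepK [::] l.

Fixpoint sred (s : seq T) : bool :=
  if s is a :: s' then
    (if s' is b :: _ then b != inv a else true) && sred s'
  else true.

Lemma sred_step s x : sred s -> sred (stepK s x).
Proof.
case: s => [//|t s] H.
rewrite /stepK. case E: (t == inv x).
  by case/andP: H.
simpl in H |- *. by rewrite E H.
Qed.

Lemma step_cancel s x : sred s -> stepK (stepK s x) (inv x) = s.
Proof.
case: s => [|t s] H; first by rewrite /stepK invK eqxx.
rewrite {2}/stepK. case E: (t == inv x).
- move/eqP: E => E. subst t. case: s H => [|u s] H; first by rewrite /stepK.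
  simpl in H. case/andP: H => H _.
  by rewrite /stepK (negbTE H).
- by rewrite /stepK invK eqxx.
Qed.

Lemma sred_fold s l : sred s -> sred (foldl stepK s l).
Proof. elim: l s => [//|x l IH] s H /=; apply: IH; exact: sred_step. Qed.

Lemma sred_red l : sred (redK l).
Proof. exact: sred_fold. Qed.

Lemma redK_cat l1 l2 : redK (l1 ++ l2) = foldl stepK (redK l1) l2.
Proof. by rewrite /redK foldl_cat. Qed.

Lemma redK_cancel p q x : redK (p ++ x :: inv x :: q) = redK (p ++ q).
Proof.
rewrite !redK_cat /= step_cancel //; exact: sred_red.
Qed.

Definition adj (a b : T) := b != inv a.
Definition fred (l : seq T) : bool := if l is a :: l' then path adj a l' else true.

Lemma redK_fred l : fred l -> redK l = rev l.
Proof.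
elim/last_ind: l => [//|l x IH] H.
have Hl : fred l.
  case: l H {IH} => [//|a l] /=; rewrite rcons_path => /andP [] //.
rewrite -cats1 redK_cat IH // cats1 rev_rcons /=.
case/lastP: l H Hl {IH} => [//|l y]; rewrite rev_rcons /=.
case: l => [|a l] /=; rewrite ?rcons_path ?last_rcons /= => H _.
  by case: ifP => // /eqP E; move: H; rewrite /adj E invK eqxx.
case/andP: H => _ H.
by case: ifP => // /eqP E; move: H; rewrite /adj E invK eqxx.
Qed.

End FreeRed.


Section Main.
Variable G : gbs.
Variable D : {set E G}.
Hypothesis HD : orientation D.
Variable f : fact G.

Local Notation key := (key D f).
Local Notation kinv := (kinv D).
Local Notation lkey := (lkey D f).
Local Notation redK := (redK kinv).

Lemma lstep_red u v : lstep D f u v -> redK (map lkey u) = redK (map lkey v).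
Proof.
case=> [p q x x' H|p q x x' H].
- have := sig_eq_key HD H; rewrite lkey_bar // => E.
  rewrite !map_cat /= E. apply: (@redK_cancel _ kinv (kinvK HD)).
- have := sig_eq_key HD H => E.
  by rewrite !map_cat /= E.
Qed.

Lemma Leq_red u v : Leq D f u v -> redK (map lkey u) = redK (map lkey v).
Proof.
elim=> [a b H|a|a b _ IH|a b c _ IH1 _ IH2] //.
- exact: lstep_red.
- by rewrite IH1.
Qed.

Lemma map_lkey_cls s : map lkey (cls s) = map key s.
Proof. by rewrite /cls -map_comp. Qed.

Lemma fred_idx idx : all (fun i => (0 < i <= fn f)%N) idx ->
  freely_reduced D f (cls idx) -> fred kinv (map key idx).
Proof.
move=> Hall Hfr.
have H : forall p q i i', idx = p ++ i :: i' :: q -> key i' != kinv (key i).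
  move=> p q i i' E; apply/negP => /eqP Hk.
  have Hi : (0 < i <= fn f)%N by move/allP: Hall; apply; rewrite E mem_cat !inE eqxx orbT.
  have Hi' : (0 < i' <= fn f)%N by move/allP: Hall; apply; rewrite E mem_cat !inE eqxx !orbT.
  apply: (Hfr [seq (j, true) | j <- p] [seq (j, true) | j <- q] (i, true) (i', true)).
    by rewrite /cls E map_cat.
  right; split => //=.
  apply/simC_key => //; split => //.
  by rewrite Hk (kinvK HD).
elim: idx Hall H {Hfr} => [//|a l IH] Hall H /=.
case: l IH Hall H => [//|b l] IH Hall H /=.
apply/andP; split.
  rewrite /adj. exact: (H [::] l a b).
have := IH; rewrite /= => -> //.
  by case/andP: Hall.
move=> p q i i' E; apply: (H (a :: p) q); by rewrite E.
Qed.

End Main.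


Section Words.
Variable G : gbs.

Lemma interp_cat (u v : seq (letter G)) : interp (u ++ v) = interp u ++ interp v.
Proof. by rewrite /interp map_cat flatten_cat. Qed.
Lemma interp_power (a : V G) k : interp (power a k) = gpow a k.
Proof. rewrite /power /interp; case: ifP => [/eqP ->|] //=; by rewrite cats0. Qed.
Lemma interp_LE (y : E G) s : interp (LE y :: s) = yl y :: interp s.
Proof. by []. Qed.
End Words.

Section Main2.
Variable G : gbs.
Variable D : {set E G}.
Hypothesis HD : orientation D.
Variable f : fact G.
Hypothesis Hf : is_fact f.

Local Notation key := (key D f).
Local Notation kinv := (kinv D).
Local Notation n := (fn f).

Definition wordm (m : nat) : seq (letter G) :=
  power (fa f 0) (fk f 0) ++ flatten [seq LE (fy f i) :: power (fa f i) (fk f i) | i <- iota 1 m].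

Lemma wordmS m : wordm m.+1 = wordm m ++ LE (fy f m.+1) :: power (fa f m.+1) (fk f m.+1).
Proof.
rewrite /wordm.
have -> : iota 1 m.+1 = iota 1 m ++ [:: m.+1] by rewrite -[m.+1]addn1 iotaD add1n addn1.
by rewrite map_cat flatten_cat /= cats0 catA.
Qed.

Fixpoint HS (s : seq nat) (e : int) : seq (letter G) :=
  if s is p :: s' then HS s' (numq (kq f (head 0%N s') p.-1)) ++ LE (fy f p) :: power (fa f p) e
  else power (fa f 0) e.

Lemma HS_split s e : interp (HS s e) = interp (HS s 0) ++ gpow (fa f (head 0%N s)) e.
Proof.
case: s => [|p s] /=; first by rewrite !interp_power.
by rewrite !interp_cat !interp_LE !interp_power /= -catA.
Qed.

Definition endV (h : nat) := (fa f h, Rp D f h).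
Definition isInt (x : rat) := x = (numq x)%:~R.

Fixpoint okV (s : seq nat) : Prop :=
  if s is p :: s' then
    [/\ okV s', (0 < p)%N, (head 0%N s' < p)%N, (p <= n)%N & endV p.-1 = endV (head 0%N s')]
  else True.
Fixpoint okI (s : seq nat) : Prop :=
  if s is p :: s' then okI s' /\ isInt (kq f (head 0%N s') p.-1) else True.

Definition Inv m s :=
  [/\ okV s, okI s, (head 0%N s <= m)%N, endV m = endV (head 0%N s) &
      isInt (kq f (head 0%N s) m) /\
      fe (interp (wordm m)) (interp (HS s (numq (kq f (head 0%N s) m))))].

Definition stepP (s : seq nat) (i : nat) :=
  if s is t :: s' then (if key t == kinv (key i) then s' else i :: s) else [:: i].

Lemma isInt_int (z : int) : isInt z%:~R.
Proof. by rewrite /isInt numq_int. Qed.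

Lemma Inv0 : Inv 0 [::].
Proof.
split => //=. rewrite kq_ii numq_int; split; first exact: isInt_int.
rewrite /wordm /= cats0; exact: fe_refl.
Qed.

Lemma fa_iota i : (0 < i <= n)%N -> iotaY (fy f i) = fa f i.-1.
Proof. by move=> H; case: (proj1 Hf i H). Qed.
Lemma fa_tau i : (0 < i <= n)%N -> tau (fy f i) = fa f i.
Proof. by move=> H; case: (proj1 Hf i H). Qed.


Lemma Pr_eq i j : Rp D f i = Rp D f j -> Pr f i = Pr f j.
Proof. by move=> H; rewrite !(Pr_piR HD) H. Qed.

Lemma pop_num p h m (z : int) : (0 < p)%N -> (h < p)%N -> (p <= m)%N ->
  Rp D f p.-1 = Rp D f h -> rho D f p m = 0 -> fy f m.+1 = bar (fy f p) ->
  kq f p m = (beta (fy f p) * z)%:~R ->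
  kq f h m.+1 = kq f h p.-1 + (alpha (fy f p) * z)%:~R + (fk f m.+1)%:~R.
Proof.
move=> p0 hp pm HR Hrho Hy Hk.
apply: (mulfI (Pr_neq0 HD f h)).
have hm : (h <= m.+2)%N by apply: leq_trans (ltnW hp) _; apply: leq_trans pm _; rewrite leqW // leqnSn.
have e1 := kqE f (i:=h) (j:=m.+1) hm.
have e2 := kqE f (i:=p) (j:=m) (leq_trans pm (leqnSn _)).
have e3 : Pr f h * kq f h p.-1 = Pf f p - Pf f h.
  have hp' : (h <= p.-1.+1)%N by rewrite prednK // ltnW.
  by rewrite (kqE f hp') prednK.
have e4 : Pr f p = Pr f h * ratio (fy f p).
  by rewrite -(prednK p0) PrS prednK // (Pr_eq HR).
have e5 : Pr f m.+1 = Pr f h.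
  rewrite PrS /rr Hy ratio_bar.
  have -> : Pr f m = Pr f p.
    apply: Pr_eq; apply/eqP; rewrite -subr_eq0 -rhoE // Hrho //.
  by rewrite e4 mulfK // ratio_neq0.
rewrite e1 PfS e5 !mulrDr e3.
have -> : Pf f m.+1 = Pf f p + Pr f p * kq f p m by rewrite e2 addrC subrK.
rewrite e4 Hk !intrM -(ratio_beta (fy f p)).
ring.
Qed.


Lemma Inv_push m s : (m < n)%N -> Inv m s -> Inv m.+1 (m.+1 :: s).
Proof.
move=> mn [HV HI Hh HE [Hk Hw]].
split => //=.
rewrite kq_ii numq_int; split; first exact: isInt_int.
rewrite wordmS interp_cat [in X in fe _ X]interp_cat.
exact: fe_catr.
Qed.

Lemma tau_bar (y : E G) : tau (bar y) = iotaY y.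
Proof. by rewrite -iota_bar bar_inv. Qed.

Lemma Inv_pop m p s : (m < n)%N -> Inv m (p :: s) -> key p = kinv (key m.+1) ->
  Inv m.+1 s.
Proof.
move=> mn [[HV p0 hp pn HEp] [HI Hg] /= Hh HE [Hk Hw]] Hkey.
set h := head 0%N s in hp HEp Hg *.
have Hkey' : key m.+1 = kinv (key p) by rewrite Hkey (kinvK HD).
have := proj1 (key_inv HD f (i:=p) (j:=m.+1) _) Hkey'.
rewrite p0 ltnS Hh => /(_ isT) [Hy Hrho [z Hz]].
rewrite /= in Hrho Hz.
case: HEp => Ha HR.
have Hm1 : (0 < m.+1 <= n)%N by rewrite ltn0Sn mn.
have Hp1 : (0 < p <= n)%N by rewrite p0 pn.
have Hnum := pop_num p0 hp Hh HR Hrho Hy Hz.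
set g := numq (kq f h p.-1) in Hg.
have Hint : kq f h m.+1 = (g + alpha (fy f p) * z + fk f m.+1)%:~R.
  by rewrite Hnum Hg !intrD.
have ham : fa f m.+1 = fa f h.
  by rewrite -(fa_tau Hm1) Hy tau_bar (fa_iota Hp1) Ha.
split => //.
- exact: leq_trans (ltnW hp) (leq_trans Hh (leqnSn m)).
- rewrite /endV ham RpS Hy (rho_bar HD).
  have -> : Rp D f m = Rp D f p by case: HE.
  rewrite -(prednK p0) RpS prednK // addrK HR //.
split; first by rewrite Hint; exact: isInt_int.
rewrite Hint numq_int wordmS interp_cat.
apply: fe_trans (fe_catr _ Hw) _.
rewrite interp_LE interp_power Hy ham /=.
rewrite HS_split /= Hz numq_int.
rewrite HS_split interp_cat interp_LE interp_power.
rewrite -!catA /=.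
rewrite -[_ :: _ ++ _ :: _]/([:: yl (fy f p)] ++ _).
have e1 : fa f p = tau (fy f p) by rewrite (fa_tau Hp1).
rewrite e1.
have hp' := pinch (fy f p) z.
have -> : [:: yl (fy f p)] ++ gpow (tau (fy f p)) (beta (fy f p) * z) ++
            yl (bar (fy f p)) :: gpow (fa f h) (fk f m.+1) =
          (yl (fy f p) :: gpow (tau (fy f p)) (beta (fy f p) * z) ++ [:: yl (bar (fy f p))]) ++
            gpow (fa f h) (fk f m.+1) by rewrite /= -catA.
rewrite HS_split.
have -> : head 0%N s = h by [].
rewrite -catA. apply: (fe_trans (fe_catl _ (fe_catl _ (fe_catr _ hp')))).
rewrite (fa_iota Hp1) Ha.
apply: fe_catl.
apply: (fe_trans (fe_catl _ (gpowD _ _ _))).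
apply: (fe_trans (gpowD _ _ _)).
rewrite addrA; exact: fe_refl.
Qed.


Lemma InvS m s : (m < n)%N -> Inv m s -> Inv m.+1 (stepP s m.+1).
Proof.
case: s => [|p s] mn H; first exact: Inv_push.
rewrite /stepP; case: eqP => E; [exact: Inv_pop E | exact: Inv_push].
Qed.

Definition st m := foldl stepP [::] (iota 1 m).

Lemma stS m : st m.+1 = stepP (st m) m.+1.
Proof.
rewrite /st.
have -> : iota 1 m.+1 = rcons (iota 1 m) m.+1 by rewrite -cats1 -[m.+1]addn1 iotaD add1n addn1.
by rewrite foldl_rcons.
Qed.

Lemma Inv_st m : (m <= n)%N -> Inv m (st m).
Proof.
elim: m => [|m IH] H; first exact: Inv0.
rewrite stS; apply: InvS => //; apply: IH; exact: ltnW.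
Qed.

Lemma map_key_fold s l :
  map key (foldl stepP s l) = foldl (stepK kinv) (map key s) (map key l).
Proof.
elim: l s => [//|i l IH] s /=; rewrite IH; congr foldl.
case: s => [//|t s] /=; by case: eqP.
Qed.

Lemma map_key_st m : map key (st m) = redK kinv (map key (iota 1 m)).
Proof. by rewrite /st map_key_fold. Qed.

End Main2.


Section Transfer.
Variable G : gbs.
Variable D : {set E G}.
Hypothesis HD : orientation D.
Variable f : fact G.
Hypothesis Hf : is_fact f.

Local Notation key := (key D f).
Local Notation kinv := (kinv D).
Local Notation n := (fn f).
Local Notation endV := (endV D f).
Local Notation okV := (okV D f).
Local Notation okI := (okI f).
Local Notation HS := (HS f).

Definition endK (k : Kt G) := (tau k.1.1, k.1.2 + rho_e D k.1.1).
Definition startK (k : Kt G) := (iotaY k.1.1, k.1.2).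

Lemma endV_key p : (0 < p <= n)%N -> endV p = endK (key p).
Proof.
move=> Hp; rewrite /endV /endK /= (fa_tau Hf Hp).
case/andP: Hp => p0 _. congr (_, _). by rewrite -{1}(prednK p0) RpS prednK.
Qed.

Lemma startV_key p : (0 < p <= n)%N -> endV p.-1 = startK (key p).
Proof. move=> Hp; by rewrite /endV /startK /= (fa_iota Hf Hp). Qed.

Fixpoint okPos (s : seq nat) : Prop :=
  if s is p :: s' then [/\ okPos s', (0 < p)%N, (head 0%N s' < p)%N & (p <= n)%N] else True.

Definition endS (ks : seq (Kt G)) := if ks is k :: _ then endK k else endV 0.

Lemma endV_head s : okPos s -> endV (head 0%N s) = endS (map key s).
Proof. case: s => [//|p s] /= [_ p0 _ pn]; apply: endV_key; by rewrite p0 pn. Qed.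

Lemma okV_pos s : okV s -> okPos s.
Proof. elim: s => [//|p s IH] /= [H1 H2 H3 H4 H5]; split => //; exact: IH. Qed.

Lemma okV_transfer s1 s2 : map key s1 = map key s2 -> okV s1 -> okPos s2 -> okV s2.
Proof.
elim: s1 s2 => [|p1 s1 IH] [|p2 s2] //= Hkk HV1 HP2.
have Hk : key p1 = key p2 := congr1 (head (key 0)) Hkk.
have Hks : map key s1 = map key s2 := congr1 behead Hkk.
case: HV1 => H1 p10 h1 p1n HE. case: HP2 => H2 p20 h2 p2n.
split => //; first exact: IH.
rewrite (startV_key (p:=p2)) ?p20 ?p2n // -Hk -startV_key ?p10 ?p1n // HE.
rewrite (endV_head (okV_pos H1)) (endV_head H2) Hks //.
Qed.

Lemma Mo_Pr p : (0 < p)%N -> Mo D (fy f p) (Rp D f p.-1) = Pr f p * (beta (fy f p))%:~R.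
Proof.
move=> p0; have e : Pr f p = Pr f p.-1 * rr f p by rewrite -{1}(prednK p0) PrS prednK.
by rewrite /Mo -(Pr_piR HD) e /rr -mulrA ratio_beta.
Qed.

Lemma key_B p1 p2 : (0 < p1)%N -> key p1 = key p2 ->
  exists z : int, Pf f p2 - Pf f p1 = Pr f p1 * (beta (fy f p1) * z)%:~R.
Proof.
move=> p0 Hk.
have Hk' := Hk; rewrite /key in Hk'; case: Hk' => ey eR ec.
rewrite -ey -eR in ec.
case/frac_eq: ec => z Hz.
exists (- z).
have hM := Mo_neq0 D (fy f p1) (Rp D f p1.-1).
rewrite intrM mulrA -Mo_Pr // intrN -Hz.
field. exact: hM.
Qed.

Lemma gap_num p1 p2 h1 h2 (z B : int) :
  (0 < p1)%N -> (h1 < p1)%N -> (h2 < p2)%N ->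
  Rp D f p1.-1 = Rp D f h1 -> Rp D f h1 = Rp D f h2 ->
  Pf f p2 - Pf f p1 = Pr f p1 * (beta (fy f p1) * z)%:~R ->
  Pf f h2 - Pf f h1 = Pr f h1 * B%:~R ->
  kq f h2 p2.-1 = kq f h1 p1.-1 + (alpha (fy f p1) * z)%:~R - B%:~R.
Proof.
move=> p0 hp1 hp2 HR1 HR12 Hz HB.
have P12 : Pr f h1 = Pr f h2 by apply: Pr_eq.
apply: (mulfI (Pr_neq0 HD f h1)).
have p20 : (0 < p2)%N by apply: leq_ltn_trans hp2.
have e1 : Pr f h1 * kq f h1 p1.-1 = Pf f p1 - Pf f h1.
  have H : (h1 <= p1.-1.+1)%N by rewrite prednK // ltnW.
  by rewrite (kqE f H) prednK.
have e2 : Pr f h1 * kq f h2 p2.-1 = Pf f p2 - Pf f h2.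
  have H : (h2 <= p2.-1.+1)%N by rewrite prednK // ltnW.
  by rewrite P12 (kqE f H) prednK.
have e3 : Pr f p1 = Pr f h1 * ratio (fy f p1).
  by rewrite -(prednK p0) PrS prednK // (Pr_eq HD HR1).
rewrite e2 !mulrDr e1 mulrN.
have -> : Pf f p2 = Pf f p1 + Pr f p1 * (beta (fy f p1) * z)%:~R by rewrite -Hz addrC subrK.
have -> : Pf f h2 = Pf f h1 + Pr f h1 * B%:~R by rewrite -HB addrC subrK.
rewrite e3 !intrM -(ratio_beta (fy f p1)).
ring.
Qed.

Lemma end_num h1 h2 m (B : int) : (h1 <= m)%N -> (h2 <= m)%N ->
  Rp D f h1 = Rp D f h2 ->
  Pf f h2 - Pf f h1 = Pr f h1 * B%:~R ->
  kq f h2 m = kq f h1 m - B%:~R.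
Proof.
move=> h1m h2m HR HB.
have P12 : Pr f h1 = Pr f h2 by apply: Pr_eq.
apply: (mulfI (Pr_neq0 HD f h1)).
rewrite mulrBr (kqE f (ltnW (h1m : (h1 < m.+1)%N))) P12 (kqE f (ltnW (h2m : (h2 < m.+1)%N))) -P12.
have -> : Pf f h2 = Pf f h1 + Pr f h1 * B%:~R by rewrite -HB addrC subrK.
ring.
Qed.


Definition btop (s : seq nat) : int := if s is p :: _ then beta (fy f p) else 0.

Lemma head_B s1 s2 : map key s1 = map key s2 -> okPos s1 ->
  exists z : int, Pf f (head 0%N s2) - Pf f (head 0%N s1) = Pr f (head 0%N s1) * (btop s1 * z)%:~R.
Proof.
case: s1 s2 => [|p1 s1] [|p2 s2] //= Hkk.
  by move=> _; exists 0; rewrite subrr mul0r mulr0.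
case=> _ p0 _ _.
have Hk : key p1 = key p2 := congr1 (head (key 0)) Hkk.
exact: key_B.
Qed.

Lemma shift_block (y : E G) (z e1 e2 : int) : e2 = e1 - beta y * z ->
  fe (yl y :: gpow (tau y) e1) (gpow (iotaY y) (alpha y * z) ++ yl y :: gpow (tau y) e2).
Proof.
move=> ->.
apply: fe_sym.
have -> : gpow (iotaY y) (alpha y * z) ++ yl y :: gpow (tau y) (e1 - beta y * z) =
          (gpow (iotaY y) (alpha y * z) ++ [:: yl y]) ++ gpow (tau y) (e1 - beta y * z).
  by rewrite -catA.
apply: (fe_trans (fe_catr _ (shift y z))).
rewrite cat_cons; apply: (fe_catl [:: yl y]).
apply: (fe_trans (gpowD _ _ _)).
rewrite addrC subrK; exact: fe_refl.
Qed.

Lemma transfer s1 s2 : map key s1 = map key s2 -> okV s1 -> okI s1 -> okPos s2 ->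
  okI s2 /\ (forall z : int,
     Pf f (head 0%N s2) - Pf f (head 0%N s1) = Pr f (head 0%N s1) * (btop s1 * z)%:~R ->
     forall e1 e2 : int, e2 = e1 - btop s1 * z -> fe (interp (HS s1 e1)) (interp (HS s2 e2))).
Proof.
elim: s1 s2 => [|p1 s1 IH] [|p2 s2] //= Hkk HV1 HI1 HP2.
  split => // z _ e1 e2 ->; rewrite mul0r subr0; exact: fe_refl.
have Hk : key p1 = key p2 := congr1 (head (key 0)) Hkk.
have Hks : map key s1 = map key s2 := congr1 behead Hkk.
case: HV1 => V1 p10 h1p1 p1n HE1.
case: HI1 => I1 Hg1.
case: HP2 => P2 p20 h2p2 p2n.
have [I2 IHfe] := IH s2 Hks V1 I1 P2.
have [z' HB] := head_B Hks (okV_pos V1).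
set h1 := head 0%N s1 in h1p1 HE1 Hg1 HB IHfe.
set h2 := head 0%N s2 in h2p2 HB IHfe.
set B := btop s1 * z' in HB IHfe.
have HR12 : Rp D f h1 = Rp D f h2.
  have := endV_head (okV_pos V1); rewrite Hks -(endV_head P2) /h1 /h2.
  by case.
case: HE1 => Ha1 HR1.
have Hgap : forall z : int, Pf f p2 - Pf f p1 = Pr f p1 * (beta (fy f p1) * z)%:~R ->
    kq f h2 p2.-1 = (numq (kq f h1 p1.-1) + alpha (fy f p1) * z - B)%:~R.
  move=> z Hz; rewrite (gap_num p10 h1p1 h2p2 HR1 HR12 Hz HB) Hg1 !intrD intrN numq_int //.
have [z0 Hz0] := key_B p10 Hk.
split.
  split => //. rewrite (Hgap z0 Hz0); exact: isInt_int.
move=> z Hz e1 e2 He.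
rewrite !interp_cat (HS_split _ s1) /= !interp_LE !interp_power.
rewrite (Hgap z Hz) numq_int.
have ey : fy f p2 = fy f p1 by case: Hk.
have Hp1 : (0 < p1 <= n)%N by rewrite p10 p1n.
have Hp2 : (0 < p2 <= n)%N by rewrite p20 p2n.
rewrite ey -(fa_tau Hf Hp2) ey -(fa_tau Hf Hp1) -catA.
apply: (fe_trans (fe_catl _ (fe_catl _ (shift_block He)))).
rewrite -(fa_iota Hf Hp1) in Ha1.
rewrite Ha1 /h1 catA -catA.
have step : forall (a : V G) (x y : int) (C : seq (glet G)),
    fe (gpow a x ++ gpow a y ++ C) (gpow a (x + y) ++ C).
  move=> a x y C; rewrite catA; exact: fe_catr (gpowD _ _ _).
apply: (fe_trans (fe_catl _ (step _ _ _ _))).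
rewrite catA -HS_split.
apply: fe_catr.
apply: IHfe HB _ _ _.
by [].
Qed.

End Transfer.


Section Conv.
Variable G : gbs.
Variable f : fact G.

Lemma word_of_S N (A : nat -> V G) (Y : nat -> E G) (K : nat -> int) :
  word_of (Fact N.+1 A Y K) = word_of (Fact N A Y K) ++ LE (Y N.+1) :: power (A N.+1) (K N.+1).
Proof.
rewrite /word_of; simpl fn; simpl fa; simpl fy; simpl fk.
have -> : iota 1 N.+1 = iota 1 N ++ [:: N.+1] by rewrite -[N.+1]addn1 iotaD add1n addn1.
by rewrite map_cat flatten_cat /= cats0 catA.
Qed.

Lemma word_of_ext N (A A' : nat -> V G) (Y Y' : nat -> E G) (K K' : nat -> int) :
  (forall t, (t <= N)%N -> [/\ A t = A' t, Y t = Y' t & K t = K' t]) ->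
  word_of (Fact N A Y K) = word_of (Fact N A' Y' K').
Proof.
move=> H; rewrite /word_of; simpl fn; simpl fa; simpl fy; simpl fk.
case: (H 0%N (leq0n _)) => -> _ ->; congr (_ ++ _).
congr flatten; apply/eq_in_map => t; rewrite mem_iota => /andP [t1 t2].
have tN : (t <= N)%N by rewrite -ltnS -(add1n N).
by case: (H t tN) => -> -> ->.
Qed.

Definition whq (q : seq nat) (m : nat) : fact G :=
  Fact (size q) (fun t => fa f (hat_start q t)) (fun t => fy f (hat_start q t))
       (fun t => numq (kq f (hat_start q t) (hat_end m q t))).

Lemma hs_rcons l x t : (t <= size l)%N -> hat_start (rcons l x) t = hat_start l t.
Proof.
move=> H; rewrite /hat_start -!rcons_cons nth_rcons /= ltnS H //.
Qed.

Lemma hs_rcons_last l x : hat_start (rcons l x) (size l).+1 = x.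
Proof. by rewrite /hat_start /= nth_rcons ltnn eqxx. Qed.

Lemma hs_last l : hat_start l (size l) = last 0%N l.
Proof. by rewrite /hat_start (last_nth 0%N). Qed.

Lemma he_rcons m l x t : (t < size l)%N -> hat_end m (rcons l x) t = hat_end x.-1 l t.
Proof.
move=> H; rewrite /hat_end nth_rcons H; congr predn; exact: set_nth_default.
Qed.

Lemma he_rcons_size m l x : hat_end m (rcons l x) (size l) = hat_end x.-1 l (size l).
Proof.
rewrite /hat_end nth_rcons ltnn eqxx nth_default //.
Qed.

Lemma he_rcons_last m l x : hat_end m (rcons l x) (size l).+1 = m.
Proof. by rewrite /hat_end nth_default // size_rcons. Qed.

Lemma word_whq q m : word_of (whq q m) = HS f (rev q) (numq (kq f (last 0%N q) m)).
Proof.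
elim/last_ind: q m => [|l x IH] m.
  by rewrite /word_of /whq /= cats0 /hat_end /=.
have hr : head 0%N (rev l) = last 0%N l.
  by case/lastP: l {IH} => // l' y; rewrite rev_rcons last_rcons.
rewrite rev_rcons /= last_rcons hr -IH /whq size_rcons word_of_S.
rewrite hs_rcons_last he_rcons_last; congr (_ ++ _).
apply: word_of_ext => t Ht.
rewrite hs_rcons //; split => //.
case: (ltngtP t (size l)) Ht => // [Hlt|->] _.
  by rewrite he_rcons.
by rewrite he_rcons_size.
Qed.

End Conv.

Section Parse.
Variable G : gbs.
Local Notation letter := (letter G).

Definition isLE (l : letter) := if l is LE _ then true else false.
Definition LEfree (x : seq letter) := ~~ has isLE x.

Lemma power_LEfree (a : V G) k : LEfree (power a k).
Proof. by rewrite /power /LEfree; case: ifP. Qed.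

Lemma cat_LEfree (x p u w : seq letter) a : LEfree x -> isLE a ->
  p ++ a :: u = x ++ w -> exists p', p = x ++ p'.
Proof.
elim: x p => [|c x IH] p Hx Ha E; first by exists p.
case: p E => [|d p] /= E.
  case: E => Ec _; subst c; by move: Hx; rewrite /LEfree /= Ha.
case: E => -> E.
have Hx' : LEfree x by move: Hx; rewrite /LEfree /= negb_or => /andP [].
have [p' ->] := IH p Hx' Ha E.
by exists p'.
Qed.

Definition blocksW (bs : seq (E G * seq letter)) := flatten [seq LE b.1 :: b.2 | b <- bs].

Lemma catlI (h a b : seq letter) : h ++ a = h ++ b -> a = b.
Proof. elim: h => [//|c h IH] /= E; apply: IH; by case: E. Qed.

Lemma parse_gen (bs : seq (E G * seq letter)) (h : seq letter) p q y X y' :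
  LEfree h -> all (fun b => LEfree b.2) bs -> LEfree X ->
  h ++ blocksW bs = p ++ LE y :: X ++ LE y' :: q ->
  exists bs1 bs2 x', bs = bs1 ++ (y, X) :: (y', x') :: bs2.
Proof.
elim: bs h p => [|[y0 x0] bs IH] h p Hh Hbs HX E.
  rewrite /blocksW /= cats0 in E.
  by move: Hh; rewrite /LEfree E has_cat /= orbT.
have [p1 Ep] := cat_LEfree Hh (isT : isLE (LE y)) (esym E).
subst p. rewrite -catA in E. have {E} E := catlI E.
rewrite /blocksW /= -/(blocksW bs) in E.
case/andP: Hbs => /= Hx0 Hbs.
case: p1 E => [|d p2] /= E.
  case: E => ey E. subst y0. clear IH.
  have [X' EX] := cat_LEfree Hx0 (isT : isLE (LE y')) (esym E).
  subst X. rewrite -catA in E. have {E} E := catlI E.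
  case: X' HX E => [|c X''] HX E.
    case: bs Hbs E => [|[y1 x1] bs''] //= _ E.
    case: E => ey1 _; subst y1.
    exists [::], bs'', x1; by rewrite cats0.
  exfalso.
  have Hc : ~~ isLE c.
    by move: HX; rewrite /LEfree has_cat /= negb_or => /andP [_]; rewrite negb_or => /andP [].
  case: bs Hbs E => [|[y1 x1] bs''] //= _ E.
  by case: E => Ec _; rewrite -Ec in Hc.
case: E => ed E.
have [p3 Ep] := cat_LEfree Hx0 (isT : isLE (LE y)) (esym E).
subst p2. rewrite -catA in E. have {E} E := catlI E.
have [bs1 [bs2 [x' ->]]] := IH [::] p3 isT Hbs HX E.
by exists ((y0, x0) :: bs1), bs2, x'.
Qed.


Definition radj (a b : letter) := isLE a || isLE b.
Definition noVV (l : seq letter) := if l is a :: l' then path radj a l' else true.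

Lemma noVV_bad p q (a : V G) k m : noVV (p ++ LV a k :: LV a m :: q) = false.
Proof.
case: p => [|c p] //=.
by rewrite cat_path /= /radj /= !andbF.
Qed.

Lemma noVV_LE (y : E G) r : noVV (LE y :: r) = noVV r.
Proof. by case: r => [|b r] //=; rewrite /radj. Qed.

Lemma noVV_h (h : seq letter) (y : E G) r : (size h <= 1)%N -> noVV (h ++ LE y :: r) = noVV r.
Proof.
case: h => [|c [|d h]] //= _; first exact: noVV_LE.
by rewrite {1}/radj orbT /= -(noVV_LE y).
Qed.

Lemma noVV_blocks (bs : seq (E G * seq letter)) (h : seq letter) :
  (size h <= 1)%N -> all (fun b => size b.2 <= 1)%N bs -> noVV (h ++ blocksW bs).
Proof.
elim: bs h => [|[y x] bs IH] h Hh Hbs.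
  rewrite /blocksW /= cats0. by case: h Hh => [|c [|d h]].
rewrite /blocksW /= -/(blocksW bs) noVV_h //.
case/andP: Hbs => Hx Hbs; exact: IH.
Qed.

Lemma power_size (a : V G) k : (size (power a k) <= 1)%N.
Proof. by rewrite /power; case: ifP. Qed.

End Parse.


Section Idx.
Variable G : gbs.
Variable D : {set E G}.
Variable f : fact G.
Local Notation n := (fn f).

Lemma head_rev (l : seq nat) : head 0%N (rev l) = last 0%N l.
Proof. by case/lastP: l => // l' y; rewrite rev_rcons last_rcons. Qed.

Lemma sorted_rcons_inv (l : seq nat) x : sorted ltn (rcons l x) -> sorted ltn l /\ (last 0%N l < x)%N \/ l = [::].
Proof.
case: l => [|a l] H; [by right | left].
move: H; rewrite /= rcons_path => /andP [H1 H2]; split => //.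
Qed.

Lemma okPos_rev idx : sorted ltn idx -> all (fun i => (0 < i <= n)%N) idx -> okPos f (rev idx).
Proof.
elim/last_ind: idx => [//|l x IH] Hs Hall.
rewrite rev_rcons /=.
have Hx : (0 < x <= n)%N by move/allP: Hall; apply; rewrite mem_rcons inE eqxx.
have Hall' : all (fun i => (0 < i <= n)%N) l by move: Hall; rewrite all_rcons => /andP [].
case/andP: Hx => x0 xn.
case: (sorted_rcons_inv Hs) => [[Hl Hlx]|->] //.
split => //; first exact: IH.
by rewrite head_rev.
Qed.

Lemma okI_rev idx : okI f (rev idx) -> forall m t, (t < size idx)%N ->
  isInt (kq f (hat_start idx t) (hat_end m idx t)).
Proof.
elim/last_ind: idx => [//|l x IH].
rewrite rev_rcons /= => [[I Hx]] m t; rewrite size_rcons ltnS => Ht.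
rewrite hs_rcons //.
case: (ltngtP t (size l)) Ht => // [Hlt|->] _.
  rewrite he_rcons //; exact: IH.
by rewrite he_rcons_size /hat_end nth_default // hs_last -head_rev.
Qed.

Lemma okV_rev idx : okV D f (rev idx) -> forall t, (0 < t <= size idx)%N ->
  endV D f (hat_start idx t).-1 = endV D f (hat_start idx t.-1) /\
  (hat_start idx t.-1 < hat_start idx t)%N.
Proof.
elim/last_ind: idx => [|l x IH]; first by move=> _ t /andP [t0 t1]; case: t t0 t1.
rewrite rev_rcons /= => [[V x0 hx xn Hx]] t; rewrite size_rcons => /andP [t0 Ht].
case: (ltngtP t (size l).+1) Ht => // [Hlt|->] _.
  have Ht' : (t <= size l)%N by rewrite -ltnS.
  have Ht1 : (t.-1 <= size l)%N by apply: leq_trans (leq_pred t) Ht'.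
  rewrite !hs_rcons //; apply: IH => //; by rewrite t0.
rewrite hs_rcons_last /= hs_rcons // hs_last -head_rev; split => //.
Qed.

End Idx.

Section Misc.
Variable G : gbs.

Lemma power_inj_k (a b : V G) k k' : power a k = power b k' -> k = k'.
Proof.
rewrite /power; case: ifP => [/eqP ->|Hk]; case: ifP => [/eqP ->|Hk'] //.
by case.
Qed.

Lemma split2 (l : seq nat) k : (k.+1 < size l)%N ->
  l = take k l ++ nth 0%N l k :: nth 0%N l k.+1 :: drop k.+2 l.
Proof.
move=> H.
rewrite -(drop_nth 0%N) // -(drop_nth 0%N) ?cat_take_drop //.
exact: ltnW.
Qed.

Lemma hs_nth (idx : seq nat) t : (0 < t)%N -> hat_start idx t = nth 0%N idx t.-1.
Proof. by case: t. Qed.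

Lemma he_hs m (idx : seq nat) t : (t < size idx)%N -> hat_end m idx t = (hat_start idx t.+1).-1.
Proof. move=> H; rewrite /hat_end /hat_start /=; congr predn; exact: set_nth_default. Qed.

Lemma word_of_blocks N (A : nat -> V G) (Y : nat -> E G) (K : nat -> int) :
  word_of (Fact N A Y K) =
  power (A 0%N) (K 0%N) ++ blocksW [seq (Y t, power (A t) (K t)) | t <- iota 1 N].
Proof. by rewrite /word_of /blocksW -map_comp. Qed.

End Misc.


Local Close Scope ring_scope.
Unset Implicit Arguments.

Theorem corollary3p9 (G : gbs) (D : {set E G}) (f : fact G) (idx : seq nat) :
  orientation D ->
  is_fact f ->
  sorted ltn idx ->
  all (fun i => (0 < i <= fn f)%N) idx ->
  freely_reduced D f (cls idx) ->
  Leq D f (cls (iota 1 (fn f))) (cls idx) ->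
  exists kh : nat -> int,
    (forall t, (t <= size idx)%N ->
       ((kh t)%:~R : rat)%R = kq f (hat_start idx t) (hat_end (fn f) idx t)) /\
    let wh := Fact (size idx) (fun t => fa f (hat_start idx t))
                   (fun t => fy f (hat_start idx t)) kh in
    is_fact wh /\ britton_reduced (word_of wh) /\ Feq (word_of f) (word_of wh).
Proof.
move=> HD Hf Hs Hall Hfr HL.
set n := fn f.
set s1 := st D f n.
have [V1 I1 h1n HE1 [Hk1 Hw1]] := Inv_st HD Hf (leqnn n).
have Hkeys : map (key D f) s1 = map (key D f) (rev idx).
  rewrite map_key_st -(map_lkey_cls D f (iota 1 n)) (Leq_red HD HL) map_lkey_cls.
  by rewrite (redK_fred (kinvK HD) (fred_idx HD Hall Hfr)) map_rev.
have P2 := okPos_rev Hs Hall.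
have V2 := okV_transfer Hf Hkeys V1 P2.
have [I2 Htr] := transfer HD Hf Hkeys V1 I1 P2.
have [z Hz] := head_B HD Hkeys (okV_pos V1).
set h1 := head 0%N s1 in h1n HE1 Hk1 Hw1 Hz Htr.
have Eh2 : head 0%N (rev idx) = last 0%N idx by exact: head_rev.
rewrite Eh2 in Hz Htr.
have h2n : (last 0%N idx <= n)%N.
  have : all (fun i => (0 < i <= fn f)%N) idx := Hall.
  case/lastP: idx {Hs Hfr HL Hkeys P2 V2 I2 Htr Hz Eh2 Hall} => // l x.
  by rewrite last_rcons all_rcons => /andP [/andP [_ ->] _].
set h2 := last 0%N idx in Hz Htr Eh2 h2n.
have HV12 : endV D f h1 = endV D f h2.
  by have := endV_head D Hf (okV_pos V1); rewrite Hkeys -(endV_head D Hf P2) Eh2.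
have HR12 : Rp D f h1 = Rp D f h2 by case: HV12.
set B := (btop f s1 * z)%R in Hz Htr.
have Hend := end_num HD h1n h2n HR12 Hz.
set kh := fun t => numq (kq f (hat_start idx t) (hat_end n idx t)).
exists kh.
have Hk2 : kq f h2 n = (numq (kq f h1 n) - B)%:~R%R.
  by rewrite Hend {1}Hk1 intrD intrN.
have Hint : forall t, (t <= size idx)%N -> isInt (kq f (hat_start idx t) (hat_end n idx t)).
  move=> t Ht; case: (ltngtP t (size idx)) Ht => // [Hlt|->] _.
    by apply: (okI_rev I2).
  rewrite hs_last /hat_end nth_default // -/h2 Hk2; exact: isInt_int.
have Hrange : forall t, (0 < t <= size idx)%N -> (0 < hat_start idx t <= n)%N.
  move=> t /andP [t0 tn]; rewrite hs_nth //.
  move/allP: Hall; apply; apply: mem_nth.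
  by rewrite -ltnS prednK.
split.
  move=> t Ht; rewrite /kh. by rewrite -Hint.
change (let wh := whq f idx n in
   is_fact wh /\ britton_reduced (word_of wh) /\ Feq (word_of f) (word_of wh)).
move=> wh.
split; [|split].
-
  split.
    move=> i Hi; rewrite /wh /whq /=.
    have Hp := Hrange i Hi.
    rewrite (fa_iota Hf Hp) (fa_tau Hf Hp); split => //.
    case: (okV_rev V2 Hi) => H _. by case: H.
  rewrite /wh /whq /= hs_last -/h2 /hat_start /=.
  case: HV12 => <- _. case: HE1 => <- _. exact: (proj2 Hf).
-
  rewrite /wh /whq word_of_blocks.
  set A := (fun t => fa f (hat_start idx t)).
  set Y := (fun t => fy f (hat_start idx t)).
  set K := (fun t => numq (kq f (hat_start idx t) (hat_end n idx t))).
  set bs := [seq (Y t, power (A t) (K t)) | t <- iota 1 (size idx)].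
  have Hbs : all (fun b => LEfree b.2) bs.
    by rewrite /bs all_map; apply/allP => t _ /=; exact: power_LEfree.
  split.
    move=> p q a k m k0 m0 E.
    have : noVV (power (A 0%N) (K 0%N) ++ blocksW bs).
      apply: noVV_blocks; first exact: power_size.
      by rewrite /bs all_map; apply/allP => t _ /=; exact: power_size.
    by rewrite E noVV_bad.
  move=> p q y m E.
  have [bs1 [bs2 [x' Eb]]] := parse_gen (power_LEfree _ _) Hbs (power_LEfree _ _) E.
  set j := size bs1.
  have Hsz : size bs = size idx by rewrite size_map size_iota.
  have Hj : (j.+1 < size idx)%N.
    by rewrite -Hsz Eb size_cat /= -/j addnS addnS ltnS ltnS leq_addr.
  have Hnth : forall i, (i < size idx)%N -> nth (y, [::]) bs i = (Y i.+1, power (A i.+1) (K i.+1)).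
    move=> i Hi; rewrite /bs (nth_map 0%N) ?size_iota // nth_iota // add1n //.
  have N1 := Hnth j (ltnW Hj).
  have N2 := Hnth j.+1 Hj.
  rewrite Eb nth_cat ltnn subnn /= in N1.
  rewrite Eb nth_cat ltnNge leqnSn /= subSn // subnn /= in N2.
  case: N1 => Ey EX. case: N2 => Eby _.
  set t := j.+1 in Ey EX Eby Hj.
  have Ht1 : (0 < t <= size idx)%N by rewrite /t ltn0Sn ltnW.
  have Ht2 : (0 < t.+1 <= size idx)%N by rewrite ltn0Sn Hj.
  set i1 := hat_start idx t in Ey EX Ht1.
  set i2 := hat_start idx t.+1 in Eby Ht2.
  have Hr1 := Hrange t Ht1. have Hr2 := Hrange t.+1 Ht2.
  have EK : K t = (beta y * m)%R by apply: power_inj_k (esym EX).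
  have Hkq : kq f i1 i2.-1 = ((beta y * m)%R)%:~R%R.
    rewrite -EK /K -Hint; last exact: ltnW.
    by rewrite (he_hs n Hj).
  case: (okV_rev V2 Ht2) => HEV Hlt.
  rewrite /= -/i1 -/i2 in HEV Hlt.
  have Hrho : rho D f i1 i2.-1 = 0%R.
    rewrite rhoE; last by rewrite -ltnS prednK // (leq_ltn_trans (leq0n _) Hlt).
    by case: HEV => _ ->; rewrite subrr.
  have HsC : simC D f i2 i1.
    split => //; split => //; split; first by rewrite /Y in Ey Eby; rewrite -Eby -Ey.
    right; split => //; split => //.
    by exists m; rewrite Hkq Ey.
  have Esp := split2 Hj.
  apply: (Hfr (cls (take j idx)) (cls (drop j.+2 idx)) (i1, true) (i2, true)).
    by rewrite {1}Esp /cls map_cat.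
  right; split => //.
-
  rewrite /Feq /wh word_whq -/h2.
  have -> : word_of f = wordm f n by [].
  apply: fe_trans Hw1 _.
  apply: (proj1 (conj (Htr z Hz (numq (kq f h1 n)) (numq (kq f h2 n)) _) I)).
  by rewrite Hk2 numq_int.
Qed.
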